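(* Let $L=\langle S,A,\to\rangle$ be a labelled transition system. For every $x,y\in\{o,b\}$ and $\bar s,\bar t\in S$, we have $\bar s\mathrel{\underline{\leftrightarrow}}_{(x,y)}\bar t$ if and only if $\bar s\,R\,\bar t$ for some symmetric relation $R\subseteq S\times S$ such that whenever $s\,R\,t$ and $s\xrightarrow{a}s'$, either $a=\tau$ and $s'\,R\,t$, or there exist states $t',t_1,t_2$ with $t\Longrightarrow_{x,R,s}t_1\xrightarrow{a}t_2\Longrightarrow_{y,R,s'}t'$ and $s'\,R\,t'$.
   Context: An LTS is $\langle S,A,\to\rangle$ with states $S$, actions $A$ containing the internal action $\tau$, and $\to\subseteq S\times A\times S$; write $s\xrightarrow{a}t$, and $\twoheadrightarrow$ for the reflexive-transitive closure of $\xrightarrow{\tau}$. For $R\subseteq S\times S$ and $s,s',t$: $s\twoheadrightarrow_{o,R,t}s'$ iff $s\twoheadrightarrow s'$; $s\twoheadrightarrow_{b,R,t}s'$ iff $s\twoheadrightarrow s'$, $t\,R\,s$ and $t\,R\,s'$. Further, $s\Longrightarrow_{o,R,t}s'$ iff $s\twoheadrightarrow s'$, and $s\Longrightarrow_{b,R,t}s'$ iff there is a finite sequence $s=s_0\xrightarrow{\tau}s_1\xrightarrow{\tau}\cdots\xrightarrow{\tau}s_n=s'$ with $t\,R\,s_i$ for all $i$. For $x,y\in\{o,b\}$, a symmetric $R$ is an $(x,y)$-generic bisimulation if whenever $s\,R\,t$ and $s\xrightarrow{a}s'$, either $a=\tau$ and $s'\,R\,t$, or there exist $t',t_1,t_2$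 with $t\twoheadrightarrow_{x,R,s}t_1\xrightarrow{a}t_2\twoheadrightarrow_{y,R,s'}t'$ and $s'\,R\,t'$. $s\mathrel{\underline{\leftrightarrow}}_{(x,y)}t$ iff some $(x,y)$-generic bisimulation relates $s$ and $t$. *)

(* Defs.v *)
From Stdlib Require Import Relations.

Set Implicit Arguments.

Record LTS := {
  St : Type;
  Act : Type;
  tau : Act;
  step : St -> Act -> St -> Prop
}.

Inductive mode := o | b.

Section Defs.
Variable L : LTS.
Notation S := (St L).

Definition tau_step (s s' : S) : Prop := step L s (tau L) s'.

Definition taus : S -> S -> Prop := clos_refl_trans_1n S tau_step.

(* s ->>_{x,R,t} s' *)
Definition taus_m (x : mode) (R : S -> S -> Prop) (t s s' : S) : Prop :=
  match x with
  | o => taus s s'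
  | b => taus s s' /\ R t s /\ R t s'
  end.

Inductive taupath_R (R : S -> S -> Prop) (t : S) : S -> S -> Prop :=
  | tp_refl : forall s, R t s -> taupath_R R t s s
  | tp_step : forall s s1 s', R t s -> tau_step s s1 -> taupath_R R t s1 s' ->
      taupath_R R t s s'.

(* s ==>_{x,R,t} s' *)
Definition wtaus_m (x : mode) (R : S -> S -> Prop) (t s s' : S) : Prop :=
  match x with
  | o => taus s s'
  | b => taupath_R R t s s'
  end.

Definition symmetric_rel (R : S -> S -> Prop) : Prop :=
  forall s t, R s t -> R t s.

Definition generic_bisim (x y : mode) (R : S -> S -> Prop) : Prop :=
  symmetric_rel R /\
  forall s t a s', R s t -> step L s a s' ->
    (a = tau L /\ R s' t) \/
    (exists t' t1 t2, taus_m x R s t t1 /\ step L t1 a t2 /\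
                      taus_m y R s' t2 t' /\ R s' t').

Definition gen_bisimilar (x y : mode) (s t : S) : Prop :=
  exists R, generic_bisim x y R /\ R s t.

End Defs.

(* Main.v *)
Require Import Defs.
From Stdlib Require Import Relations.

#[local] Arguments taus {L} _ _.
#[local] Arguments taus_m {L} x R t s s'.
#[local] Arguments wtaus_m {L} x R t s s'.
#[local] Arguments taupath_R {L} R t _ _.
#[local] Arguments tau_step {L} s s'.
#[local] Arguments tp_refl {L} R t s _.
#[local] Arguments tp_step {L} R t s s1 s' _ _ _.
#[local] Arguments symmetric_rel {L} R.

Lemma taus_refl {L : LTS} (s : St L) : taus s s.
Proof. constructor. Qed.

Lemma taus_trans {L : LTS} (a b0 c : St L) : taus a b0 -> taus b0 c -> taus a c.
Proof.
  unfold taus; intros H; revert c; induction H; intros c Hc; auto.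
  econstructor; [eauto|]. apply IHclos_refl_trans_1n; exact Hc.
Qed.

Lemma taus_last {L : LTS} {a c : St L} : taus a c ->
  a = c \/ exists c0, taus a c0 /\ tau_step c0 c.
Proof.
  intros H; induction H as [|x y z Hxy Hyz IH]; auto.
  right. destruct IH as [<-|[c0 [H1 H2]]].
  - exists x; split; [apply taus_refl|exact Hxy].
  - exists c0; split; [econstructor; eauto|exact H2].
Qed.

Lemma path_lemma {L : LTS} (R : St L -> St L -> Prop) (s t t1 : St L) :
  taus t t1 -> (forall u, taus t u -> taus u t1 -> R s u) -> taupath_R R s t t1.
Proof.
  intros H; induction H as [x|x y z Hxy Hyz IH]; intros Hu.
  - apply tp_refl. apply Hu; apply taus_refl.
  - eapply tp_step.
    + apply Hu; [apply taus_refl| econstructor; eauto].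
    + exact Hxy.
    + apply IH. intros u H1 H2. apply Hu; [econstructor; eauto| exact H2].
Qed.

Lemma yconv {L : LTS} {y : mode} {R R' : St L -> St L -> Prop} {s' t2 t' : St L} :
  (forall a c, R a c -> R' a c) ->
  taus_m y R s' t2 t' -> R s' t' ->
  exists t'', wtaus_m y R' s' t2 t'' /\ R' s' t''.
Proof.
  intros HR; destruct y; simpl.
  - intros H1 H2; exists t'; auto.
  - intros [H1 [H2 H3]] _. exists t2; split; [apply tp_refl|]; auto.
Qed.

Lemma taus_m_mono {L : LTS} (y : mode) (R R' : St L -> St L -> Prop) (s t t' : St L) :
  (forall a c, R a c -> R' a c) -> taus_m y R s t t' -> taus_m y R' s t t'.
Proof. intros HR; destruct y; simpl; intuition. Qed.

Definition semi {L : LTS} (y : mode) (R : St L -> St L -> Prop) : Prop :=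
  symmetric_rel R /\
  forall s t a s', R s t -> step L s a s' ->
    (a = tau L /\ exists t', taus t t' /\ R s t' /\ R s' t') \/
    (exists t' t1 t2, taus t t1 /\ R s t1 /\ step L t1 a t2 /\
                      taus_m y R s' t2 t' /\ R s' t').

Definition Sb {L : LTS} (y : mode) (s t : St L) : Prop :=
  exists R, semi y R /\ R s t.

Lemma semi_Sb (L : LTS) (y : mode) : semi y (@Sb L y).
Proof.
  split.
  - intros s t [R [[Hs Ht] HR]]. exists R; split; [split|]; auto.
  - intros s t a s' [R [[Hs Ht] HR]] Hst.
    assert (HRS : forall a c, R a c -> Sb y a c).
    { intros a0 c H; exists R; split; [split|]; auto. }
    destruct (Ht _ _ _ _ HR Hst) as [[Ha [t' [H1 [H2 H3]]]]|[t' [t1 [t2 [H1 [H2 [H3 [H4 H5]]]]]]]].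
    + left; split; auto; exists t'; auto.
    + right; exists t', t1, t2; repeat split; auto.
      eapply taus_m_mono; eauto.
Qed.

Lemma transfer {L : LTS} (y : mode) (R : St L -> St L -> Prop) (v v' r : St L) :
  semi y R -> R v r -> taus v v' -> exists r', taus r r' /\ R v' r'.
Proof.
  intros HS HR H; revert r HR; induction H as [x|x z w Hxz Hzw IH]; intros r HR.
  - exists r; split; [apply taus_refl|auto].
  - destruct HS as [_ Ht].
    destruct (Ht _ _ _ _ HR Hxz) as [[_ [t' [H1 [_ H3]]]]|[t' [t1 [t2 [H1 [_ [H3 [H4 H5]]]]]]]].
    + destruct (IH _ H3) as [r' [Hr1 Hr2]]. exists r'; split; auto.
      eapply taus_trans; eauto.
    + destruct (IH _ H5) as [r' [Hr1 Hr2]]. exists r'; split; auto.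
      eapply taus_trans; [exact H1|]. econstructor; [exact H3|].
      eapply taus_trans; [|exact Hr1].
      destruct y; simpl in H4; intuition.
Qed.

Definition Mrel {L : LTS} (y : mode) (p q : St L) : Prop :=
  exists t t1, taus t q /\ taus q t1 /\ Sb y p t /\ Sb y p t1.

Definition Qrel {L : LTS} (y : mode) (p q : St L) : Prop :=
  Mrel y p q \/ Mrel y q p.

Lemma Sb_Q {L : LTS} (y : mode) (p q : St L) : Sb y p q -> Qrel y p q.
Proof. intros H; left; exists q, q; repeat split; auto; apply taus_refl. Qed.

Lemma semi_Q (L : LTS) (y : mode) : semi y (@Qrel L y).
Proof.
  destruct (semi_Sb L y) as [Ssym St].
  split.
  - intros p q [H|H]; [right|left]; auto.
  - intros p q a p' [[t [t1 [Htq [Hqt1 [Hpt Hpt1]]]]]|[t [t1 [Htp [Hpt1 [Hqt Hqt1]]]]]] Hstep.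
    + destruct (St _ _ _ _ Hpt1 Hstep) as [[Ha [w [H1 [H2 H3]]]]|[w' [w1 [w2 [H1 [H2 [H3 [H4 H5]]]]]]]].
      * left; split; auto. exists w; repeat split; try apply Sb_Q; auto.
        eapply taus_trans; eauto.
      * right; exists w', w1, w2; repeat split; try apply Sb_Q; auto.
        -- eapply taus_trans; eauto.
        -- eapply taus_m_mono; [|eauto]. intros; apply Sb_Q; auto.
    + destruct (@transfer L y _ _ _ _ (semi_Sb L y) (Ssym _ _ Hqt) Htp) as [r [Hqr Hpr]].
      destruct (St _ _ _ _ Hpr Hstep) as [[Ha [w [H1 [H2 H3]]]]|[w' [w1 [w2 [H1 [H2 [H3 [H4 H5]]]]]]]].
      * left; split; auto. exists w; repeat split; try apply Sb_Q; auto.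
        eapply taus_trans; eauto.
      * right; exists w', w1, w2; repeat split; try apply Sb_Q; auto.
        -- eapply taus_trans; eauto.
        -- eapply taus_m_mono; [|eauto]. intros; apply Sb_Q; auto.
Qed.

Lemma stutter {L : LTS} (y : mode) (s t u t1 : St L) :
  Sb y s t -> Sb y s t1 -> taus t u -> taus u t1 -> Sb y s u.
Proof.
  intros H1 H2 H3 H4. exists (@Qrel L y); split; [apply semi_Q|].
  left; exists t, t1; auto.
Qed.

Theorem theorem4p9 (L : LTS) (x y : mode) (sb tb : St L) :
  @gen_bisimilar L x y sb tb <->
  exists R : St L -> St L -> Prop,
    R sb tb /\
    @symmetric_rel L R /\
    (forall s t a s', R s t -> step L s a s' ->
       (a = tau L /\ R s' t) \/
       (exists t' t1 t2, @wtaus_m L x R s t t1 /\ step L t1 a t2 /\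
                         @wtaus_m L y R s' t2 t' /\ R s' t')).
Proof.
  split.
  - intros [R [[Hsym Ht] HR]]. destruct x.
    + exists R; repeat split; auto.
      intros s t a s' Hst Hs.
      destruct (Ht _ _ _ _ Hst Hs) as [H|[t' [t1 [t2 [H1 [H2 [H3 H4]]]]]]]; auto.
      destruct (yconv (fun a c H => H) H3 H4) as [t'' [H5 H6]].
      right; exists t'', t1, t2; auto.
    + assert (Hsemi : semi y R).
      { split; auto. intros s t a s' Hst Hs.
        destruct (Ht _ _ _ _ Hst Hs) as [[Ha H]|[t' [t1 [t2 [H1 [H2 [H3 H4]]]]]]].
        - left; split; auto; exists t; repeat split; auto; apply taus_refl.
        - destruct H1 as [H1a [H1b H1c]].
          right; exists t', t1, t2; repeat split; auto. }
      destruct (semi_Sb L y) as [Ssym St].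
      exists (@Sb L y); repeat split.
      * exists R; auto.
      * exact Ssym.
      * intros s t a s' Hst Hs.
        destruct (St _ _ _ _ Hst Hs) as [[Ha [w [H1 [H2 H3]]]]|[w' [w1 [w2 [H1 [H2 [H3 [H4 H5]]]]]]]].
        -- destruct (taus_last H1) as [<-|[c0 [Hc1 Hc2]]]; [left; auto|].
           right. destruct (yconv (y := o) (fun a c H => H) (taus_refl w) H3) as [t'' [H6 H7]].
           destruct y.
           ++ exists w, c0, w; repeat split.
              ** simpl. apply path_lemma; auto. intros u Hu1 Hu2.
                 eapply stutter; [exact Hst|exact H2|exact Hu1|].
                 eapply taus_trans; [exact Hu2|]. econstructor; [exact Hc2|apply taus_refl].
              ** rewrite Ha; exact Hc2.
              ** simpl; apply taus_refl.
              ** exact H3.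
           ++ exists w, c0, w; repeat split.
              ** simpl. apply path_lemma; auto. intros u Hu1 Hu2.
                 eapply stutter; [exact Hst|exact H2|exact Hu1|].
                 eapply taus_trans; [exact Hu2|]. econstructor; [exact Hc2|apply taus_refl].
              ** rewrite Ha; exact Hc2.
              ** simpl; apply tp_refl; exact H3.
              ** exact H3.
        -- destruct (yconv (fun a c H => H) H4 H5) as [t'' [H6 H7]].
           right; exists t'', w1, w2; repeat split; auto.
           simpl. apply path_lemma; auto. intros u Hu1 Hu2.
           eapply stutter; [exact Hst|exact H2|exact Hu1|exact Hu2].
  - intros [R [HR [Hsym Ht]]]. exists R; split; auto. split; auto.
    intros s t a s' Hst Hs.
    destruct (Ht _ _ _ _ Hst Hs) as [H|[t' [t1 [t2 [H1 [H2 [H3 H4]]]]]]]; auto.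
    right; exists t', t1, t2.
    assert (Hw : forall z (Rr : St L -> St L -> Prop) p q r, wtaus_m z Rr p q r -> taus_m z Rr p q r).
    { intros z Rr p q r; destruct z; simpl; auto.
      intros Hp; induction Hp as [q Hq|q q1 r Hq Hq1 Hp [IH1 [IH2 IH3]]].
      - repeat split; auto; apply taus_refl.
      - repeat split; auto. econstructor; eauto. }
    repeat split; auto.
Qed.
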